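(* Consider the no-slip billiard in a circular solid cylinder $\mathcal{B}\subset\mathbb{R}^3$ with axis vector $e$, whose moving particle is subject to a constant force directed along the axis of the cylinder. If the first collision satisfies the transversal rolling impact condition and the first flight segment does not pass through the axis of the cylinder, then the particle's trajectory is bounded.
   Context: The moving particle is a ball of radius $r>0$ with a rotationally symmetric mass distribution of total mass $m$ whose second-moment matrix per unit mass is $\lambda I$, $\lambda=(r\gamma)^2/2$, $\gamma>0$. Put $c=\frac{1-\gamma^2}{1+\gamma^2}$, $s=\frac{2\gamma}{1+\gamma^2}$, and for $a,b\in\mathbb{R}^3$ let $a\wedge b\in\mathfrak{so}(3)$ be $(a\wedge b)x=(a\cdot x)b-(b\cdot x)a$. The billiard domain $\mathcal{B}$ (the set of admissible centers) is $\{x:|x-(x\cdot e)e|\le R-r\}$ for some $R>r$; at $a\in\partial\mathcal{B}$, $\nu_a$ is the unit normal pointing into $\mathcal{B}$. A state is $(a,u,U)$ with $u$ the center-of-mass velocity and $U\in\mathfrak{so}(3)$ the angular velocity matrix (a material point at $x$ has velocity $U(x-a)+u$). Between collisions $U$ is constant and the center of mass moves with constant acceleration $F/m$, $F$ the constant force; at a collision at $a$ the pre-collision $(u,U)$ is replaced by $C_a(u,U)=\big(cu-\tfrac{s}{\gamma}(u\cdot\nu_a)\nu_a+s\gamma rU\nu_a,\ \tfrac{s}{\gamma r}\nu_a\wedge u+U-\tfrac{s}{\gamma}\nu_a\wedge U\nu_a\big)$. A pre-collision state $(a,u,U)$ satisfies the transversal rolling impact condition if the orthogonal projection of $v=u-rU\nu_a$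 onto $e^\perp\cap T_a\partial\mathcal{B}$ is zero; equivalently, with $\omega$ defined by $Ux=\omega\times x$ and $\tau_a=\nu_a\times e$, $u\cdot\tau_a+r\,\omega\cdot e=0$. *)

(* Defs.v *)
(* vectors in R^3 are column vectors 'cV[R]_3 over R : realType;
   angular velocity matrices are 'M[R]_3 (skew-symmetric). *)
From HB Require Import structures.
From mathcomp Require Import all_boot all_order all_algebra.
From mathcomp Require Import reals.
Set Implicit Arguments. Unset Strict Implicit. Unset Printing Implicit Defensive.
Import Order.TTheory GRing.Theory Num.Theory.
Local Open Scope ring_scope.

Section Billiard.
Variable R : realType.
Notation vec := 'cV[R]_3.
Notation mat := 'M[R]_3.

Definition dot (u v : vec) : R := (u^T *m v) ord0 ord0.
Definition vnorm (u : vec) : R := Num.sqrt (dot u u).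

Definition coord3 (u : vec) (k : nat) : R := u (inord k) ord0.
Definition cross (u v : vec) : vec :=
  \col_(i < 3)
    (if val i == 0%N then coord3 u 1 * coord3 v 2 - coord3 u 2 * coord3 v 1
     else if val i == 1%N then coord3 u 2 * coord3 v 0 - coord3 u 0 * coord3 v 2
     else coord3 u 0 * coord3 v 1 - coord3 u 1 * coord3 v 0).

(* a /\ b in so(3):  (a /\ b) x = (a . x) b - (b . x) a *)
Definition wedge (a b : vec) : mat := b *m a^T - a *m b^T.

Definition perp (e x : vec) : vec := x - dot x e *: e.

(* the billiard domain (admissible centers): |x - (x.e)e| <= Rc - r *)
Definition in_domain (e : vec) (Rc r : R) (x : vec) : Prop :=
  vnorm (perp e x) <= Rc - r.
Definition in_interior (e : vec) (Rc r : R) (x : vec) : Prop :=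
  vnorm (perp e x) < Rc - r.
Definition on_boundary (e : vec) (Rc r : R) (x : vec) : Prop :=
  vnorm (perp e x) = Rc - r.

Definition nu (e a : vec) : vec := - ((vnorm (perp e a))^-1 *: perp e a).

(* tau_a = nu_a x e, spanning e^perp /\ T_a(boundary) *)
Definition tau (e a : vec) : vec := cross (nu e a) e.

Definition cgam (g : R) : R := (1 - g ^+ 2) / (1 + g ^+ 2).
Definition sgam (g : R) : R := (2 * g) / (1 + g ^+ 2).

Definition collision (e : vec) (g r : R) (a u : vec) (U : mat) : vec * mat :=
  let n := nu e a in
  (cgam g *: u - (sgam g / g * dot u n) *: n + (sgam g * g * r) *: (U *m n),
   (sgam g / (g * r)) *: wedge n u + U - (sgam g / g) *: wedge n (U *m n)).

(* transversal rolling impact condition: the orthogonal projection of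
   v = u - r U nu_a onto the line e^perp /\ T_a(boundary) = span(tau_a)
   (tau_a a unit vector) vanishes, i.e. v . tau_a = 0 *)
Definition transversal_rolling (e : vec) (r : R) (a u : vec) (U : mat) : Prop :=
  dot (u - r *: (U *m nu e a)) (tau e a) = 0.

Definition flight (m : R) (F a u : vec) (t : R) : vec :=
  a + t *: u + (t ^+ 2 / (2 * m)) *: F.

(* An (infinite) no-slip billiard trajectory, described by its collisions:
   (a n, u n, U n) is the pre-collision state at the n-th collision,
   T n > 0 the duration of the n-th flight segment (after the n-th collision). *)
Definition noslip_trajectory (e : vec) (Rc r g m : R) (F : vec)
    (a u : nat -> vec) (U : nat -> mat) (T : nat -> R) : Prop :=
  forall n : nat,
    on_boundary e Rc r (a n) /\ 0 < T n /\
    let uU' := collision e g r (a n) (u n) (U n) in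
    (forall t, 0 < t < T n -> in_interior e Rc r (flight m F (a n) uU'.1 t)) /\
    a n.+1 = flight m F (a n) uU'.1 (T n) /\
    u n.+1 = uU'.1 + (T n / m) *: F /\
    U n.+1 = uU'.2.

End Billiard.

(* Main.v *)
Require Import Defs.
From HB Require Import structures.
From mathcomp Require Import all_boot all_order all_algebra.
From mathcomp Require Import reals.
From mathcomp Require Import ring lra.
Import Order.TTheory GRing.Theory Num.Theory.
Local Open Scope ring_scope.

Section Basic.
Variable R : realType.

Lemma sum3 (F : 'I_3 -> R) : \sum_(i < 3) F i = F (inord 0) + F (inord 1) + F (inord 2).
Proof.
rewrite !big_ord_recl big_ord0 addr0 addrA.
by congr (F _ + F _ + F _); apply/val_inj; rewrite /= inordK.
Qed.

Lemma sum1 (F : 'I_1 -> R) : \sum_(i < 1) F i = F ord0.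
Proof. by rewrite big_ord1. Qed.

Lemma ord3 (i : 'I_3) : i = inord 0 \/ i = inord 1 \/ i = inord 2.
Proof.
case: i => [[|[|[|k]]] Hi]; [left|right;left|right;right|done];
  by apply/val_inj; rewrite /= inordK.
Qed.

Lemma colP3 (x y : 'cV[R]_3) : x (inord 0) ord0 = y (inord 0) ord0 ->
  x (inord 1) ord0 = y (inord 1) ord0 ->
  x (inord 2) ord0 = y (inord 2) ord0 -> x = y.
Proof.
move=> H0 H1 H2; apply/matrixP => i j; rewrite (ord1 j).
by case: (ord3 i) => [->|[->|->]].
Qed.

Lemma vi0 : val (inord 0 : 'I_3) = 0%N. Proof. by rewrite /= inordK. Qed.
Lemma vi1 : val (inord 1 : 'I_3) = 1%N. Proof. by rewrite /= inordK. Qed.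
Lemma vi2 : val (inord 2 : 'I_3) = 2%N. Proof. by rewrite /= inordK. Qed.
End Basic.

Ltac sc := rewrite ?/flight ?/perp ?/wedge ?/cross ?/coord3 ?/dot; rewrite !(mxE, sum3, sum1).
Ltac vc := apply: colP3; sc; rewrite ?vi0 ?vi1 ?vi2 /=.

Section Gen.
Variable R : realType.


Implicit Types (x y z w n t : 'cV[R]_3) (M : 'M[R]_3).

Lemma g_dot_ge0 x : 0 <= dot x x.
Proof. sc; nra. Qed.

Lemma g_dotC x y : dot x y = dot y x.
Proof. sc; ring. Qed.

Lemma g_perp_e e x : dot (perp e x) e = dot x e * (1 - dot e e).
Proof. sc; ring. Qed.

Lemma g_perp_flight e (m f t : R) a v :
  perp e (flight m (f *: e) a v t) =
  perp e a + t *: perp e v + (t ^+ 2 / (2 * m) * f * (1 - dot e e)) *: e.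
Proof. vc; ring. Qed.

Lemma g_flight_e e (m f t : R) a v :
  dot (flight m (f *: e) a v t) e = dot a e + t * dot v e + t ^+ 2 / (2 * m) * f * dot e e.
Proof. sc; ring. Qed.

Lemma g_dotXX e x : dot x x = dot (perp e x) (perp e x) + dot x e ^+ 2 * (2 - dot e e).
Proof. sc; ring. Qed.

Lemma g_compl x n e : dot x n *: n + dot x (cross n e) *: cross n e + dot x e *: e =
  dot (cross n e) (cross n e) *: x + dot n x *: (dot n e *: e + (1 - dot e e) *: n)
  + dot e x *: ((1 - dot n n) *: e + dot e n *: n).
Proof. vc; ring. Qed.

Lemma g_lagr n e : dot (cross n e) (cross n e) = dot n n * dot e e - dot n e ^+ 2.
Proof. sc; rewrite ?vi0 ?vi1 ?vi2 /=; ring. Qed.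

Lemma g_crn n e : dot (cross n e) n = 0.
Proof. sc; rewrite ?vi0 ?vi1 ?vi2 /=; ring. Qed.

Lemma g_cre n e : dot (cross n e) e = 0.
Proof. sc; rewrite ?vi0 ?vi1 ?vi2 /=; ring. Qed.

Lemma g_cross_lin (a b : R) n e :
  cross (a *: n + b *: cross n e) e = a *: cross n e + b *: (dot n e *: e - dot e e *: n).
Proof. vc; ring. Qed.

Lemma g_dot_lin (a b : R) x y z : dot (a *: x + b *: y) z = a * dot x z + b * dot y z.
Proof. sc; ring. Qed.

Lemma g_dot_comb (a b : R) x y : dot (a *: x + b *: y) (a *: x + b *: y) =
  a ^+ 2 * dot x x + 2 * a * b * dot x y + b ^+ 2 * dot y y.
Proof. sc; ring. Qed.

Lemma g_dotM_lin (a b : R) z M x y :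
  dot z (M *m (a *: x + b *: y)) = a * dot z (M *m x) + b * dot z (M *m y).
Proof. sc; ring. Qed.

Lemma g_bil (a b c d : R) x y z w M :
  dot (a *: x + b *: y) (M *m (c *: z + d *: w)) =
  a * c * dot x (M *m z) + a * d * dot x (M *m w) + b * c * dot y (M *m z)
  + b * d * dot y (M *m w).
Proof. sc; ring. Qed.

Lemma g_dot_subZ (k : R) x y z : dot (x - k *: y) z = dot x z - k * dot y z.
Proof. sc; ring. Qed.

Lemma g_dot_addZZ (k f : R) x e z : dot (x + k *: (f *: e)) z = dot x z + k * f * dot e z.
Proof. sc; ring. Qed.

Lemma g_dotMT x y M : dot x (M *m y) = dot y (M^T *m x).
Proof. sc; ring. Qed.

Lemma g_dotNM x y M : dot x ((- M) *m y) = - dot x (M *m y).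
Proof. sc; ring. Qed.

Lemma g_skew0 x M : M^T = - M -> dot x (M *m x) = 0.
Proof.
move=> h; have := g_dotMT x x M; rewrite h g_dotNM; lra.
Qed.

Lemma g_skew1 x y M : M^T = - M -> dot x (M *m y) = - dot y (M *m x).
Proof. by move=> h; rewrite g_dotMT h g_dotNM. Qed.

Lemma g_coll1 e (g r : R) a u M t :
  dot (collision e g r a u M).1 t = cgam g * dot u t
    - sgam g / g * dot u (nu e a) * dot (nu e a) t + sgam g * g * r * dot t (M *m nu e a).
Proof. rewrite /collision /=; sc; ring. Qed.

Lemma g_coll2 e (g r : R) a u M t y :
  dot t ((collision e g r a u M).2 *m y) =
  sgam g / (g * r) * (dot (nu e a) y * dot u t - dot u y * dot (nu e a) t)
  + dot t (M *m y)
  - sgam g / g * (dot (nu e a) y * dot t (M *m nu e a) - dot (M *m nu e a) y * dot (nu e a) t).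
Proof. rewrite /collision /=; sc; ring. Qed.

Lemma g_coll2_skew e (g r : R) a u M : M^T = - M ->
  ((collision e g r a u M).2)^T = - (collision e g r a u M).2.
Proof.
move=> h; have hM : forall i j, M j i = - M i j.
  by move=> i j; move/matrixP: h => /(_ i j); rewrite !mxE.
rewrite /collision /=; apply/matrixP => i j; rewrite !mxE !(sum1, sum3, mxE).
rewrite [M j i]hM; ring.
Qed.


Lemma g_dotNZ (k : R) x y : dot (- (k *: x)) y = - (k * dot x y).
Proof. sc; ring. Qed.

Lemma g_dotNZ2 (k : R) x : dot (- (k *: x)) (- (k *: x)) = k ^+ 2 * dot x x.
Proof. sc; ring. Qed.

Lemma g_comb2 (rho T A L : R) n t :
  - rho *: n + T *: (A *: n + L *: t) = (T * A - rho) *: n + (T * L) *: t.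
Proof. vc; ring. Qed.

Lemma g_nu_lin2 (rho T A L : R) n t : rho != 0 ->
  - (rho^-1 *: ((T * A - rho) *: n + (T * L) *: t)) =
  (1 - T * A / rho) *: n + (- (T * L / rho)) *: t.
Proof. move=> h; vc; field; exact: h. Qed.

Lemma g_PE (k : R) x : k != 0 -> x = - k *: (- (k^-1 *: x)).
Proof. move=> h; vc; field; exact: h. Qed.

Lemma g_compl' x n e : dot n n = 1 -> dot e e = 1 -> dot n e = 0 ->
  x = dot x n *: n + dot x (cross n e) *: cross n e + dot x e *: e.
Proof.
move=> h1 h2 h3; rewrite g_compl g_lagr h1 h2 h3 (g_dotC e n) h3.
vc; ring.
Qed.

Lemma g_dot_linr (a b : R) x y z : dot z (a *: x + b *: y) = a * dot z x + b * dot z y.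
Proof. sc; ring. Qed.

End Gen.

Section Alg.
Variable R : realType.

Lemma abs_sq_le (y Q : R) : y ^+ 2 <= Q -> - (1 + Q) <= y <= 1 + Q.
Proof. move=> h; apply/andP; split; nra. Qed.

Lemma prod_bnd (t Tc x B : R) : 0 <= t <= Tc -> - B <= x <= B ->
  - (Tc * B) <= t * x <= Tc * B.
Proof. move=> /andP[h1 h2] /andP[h3 h4]; apply/andP; split; nra. Qed.

Lemma scal_bnd (k y Y : R) : - Y <= y <= Y -> - (`|k| * Y) <= k * y <= `|k| * Y.
Proof.
move=> hy; rewrite -ler_norml normrM; apply: ler_wpM2l => //.
by rewrite ler_norml.
Qed.

Lemma nat_const (F : nat -> R) : (forall n, F n.+1 = F n) -> forall n, F n = F 0%N.
Proof. by move=> h; elim=> // n <-. Qed.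

Lemma alg_bound (g A L Tc f m C S : R) (p q k z : nat -> R) :
  0 < g -> 0 < A -> 0 < m -> 0 <= Tc ->
  C = 1 - 2 * A ^+ 2 / (A ^+ 2 + L ^+ 2) ->
  S = - (2 * A * L / (A ^+ 2 + L ^+ 2)) ->
  (forall n, p n.+1 = cgam g * p n + sgam g * q n + Tc * f / m) ->
  (forall n, q n.+1 = C * (sgam g * p n - cgam g * q n) + S * k n) ->
  (forall n, k n.+1 = C * k n - S * (sgam g * p n - cgam g * q n)) ->
  (forall n, z n.+1 = z n + Tc * (cgam g * p n + sgam g * q n) + Tc ^+ 2 / (2 * m) * f) ->
  exists K, forall n t, 0 <= t <= Tc ->
    `|z n + t * (cgam g * p n + sgam g * q n) + t ^+ 2 / (2 * m) * f| <= K.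
Proof.
move=> Hg HA Hm HT HC HS Hp Hq Hk Hz.
have g0 : g != 0 by rewrite gt_eqF.
have A0 : A != 0 by rewrite gt_eqF.
have m0 : m != 0 by rewrite gt_eqF.
have g2 : 1 + g ^+ 2 != 0 by rewrite gt_eqF // ltr_wpDr ?sqr_ge0.
have N0 : A ^+ 2 + L ^+ 2 != 0.
  by rewrite gt_eqF // ltr_wpDr ?sqr_ge0 // exprn_gt0.
pose d := Tc * f / m.
pose yp n := p n - d / 2.
pose yq n := q n + d / (2 * g).
pose yk n := k n - L * d / (2 * g * A).
pose Q n := yp n ^+ 2 + yq n ^+ 2 + yk n ^+ 2.
pose Phi n := z n + Tc * (- (yp n / 2) + yq n / (2 * g) - L * yk n / (2 * g * A)).
have HQ : forall n, Q n = Q 0%N.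
  apply: nat_const; intro i0; rewrite /Q /yp /yq /yk Hp Hq Hk HC HS /d /cgam /sgam.
  field; rewrite ?g0 ?A0 ?N0 ?g2 ?m0 //.
have HPhi : forall n, Phi n = Phi 0%N.
  apply: nat_const; intro i0; rewrite /Phi /yp /yq /yk Hp Hq Hk Hz HC HS /d /cgam /sgam.
  field; rewrite ?g0 ?A0 ?N0 ?g2 ?m0 //.
have hc : -1 <= cgam g <= 1.
  rewrite /cgam; apply/andP; split.
    rewrite ler_pdivlMr ?ltr_wpDr ?sqr_ge0 //; nra.
  rewrite ler_pdivrMr ?ltr_wpDr ?sqr_ge0 //; nra.
have hs : -1 <= sgam g <= 1.
  rewrite /sgam; have := sqr_ge0 (g - 1); have := sqr_ge0 (g + 1).
  move=> h1 h2; apply/andP; split.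
    rewrite ler_pdivlMr ?ltr_wpDr ?sqr_ge0 //; nra.
  rewrite ler_pdivrMr ?ltr_wpDr ?sqr_ge0 //; nra.
pose Y := 1 + Q 0%N.
have bp : forall n, - Y <= yp n <= Y.
  move=> n; apply: abs_sq_le; rewrite -(HQ n) /Q; nra.
have bq : forall n, - Y <= yq n <= Y.
  move=> n; apply: abs_sq_le; rewrite -(HQ n) /Q; nra.
have bk : forall n, - Y <= yk n <= Y.
  move=> n; apply: abs_sq_le; rewrite -(HQ n) /Q; nra.
have cb : forall (c x : R), -1 <= c <= 1 -> - Y <= x <= Y -> - Y <= c * x <= Y.
  move=> c x /andP[? ?] /andP[? ?]; apply/andP; split; nra.
pose k1 := (2 * g)^-1.
pose k2 := L / (2 * g * A).
pose k3 := f / (2 * m).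
exists (`|Phi 0%N| + Tc * Y + Tc * (`|k1| * Y) + Tc * (`|k2| * Y) + Tc * Y + Tc * Y
   + Tc * (`|d / 2|) + Tc ^+ 2 * `|k3|).
move=> n t ht.
have -> : z n + t * (cgam g * p n + sgam g * q n) + t ^+ 2 / (2 * m) * f =
  Phi 0%N + Tc * (yp n / 2) - Tc * (k1 * yq n) + Tc * (k2 * yk n)
  + t * (cgam g * yp n) + t * (sgam g * yq n) - t * (d / 2) + t ^+ 2 * k3.
  rewrite -(HPhi n) /Phi /yp /yq /yk /k1 /k2 /k3 /d /cgam /sgam.
  field; rewrite ?g0 ?A0 ?N0 ?g2 ?m0 //.
have hT : 0 <= Tc <= Tc by rewrite HT lexx.
have t2 : 0 <= t ^+ 2 <= Tc ^+ 2.
  case/andP: ht => ? ?; apply/andP; split; nra.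
have e1 := prod_bnd _ _ _ _ hT (cb _ _ (ltac:(lra) : -1 <= 1/2 <= 1) (bp n)).
have e2 := prod_bnd _ _ _ _ hT (scal_bnd k1 _ _ (bq n)).
have e3 := prod_bnd _ _ _ _ hT (scal_bnd k2 _ _ (bk n)).
have e4 := prod_bnd _ _ _ _ ht (cb _ _ hc (bp n)).
have e5 := prod_bnd _ _ _ _ ht (cb _ _ hs (bq n)).
have e6 := prod_bnd _ _ _ _ ht (scal_bnd (d / 2) _ _ (ltac:(lra) : -1 <= 1 <= 1)).
have e7 := prod_bnd _ _ _ _ t2 (scal_bnd k3 _ _ (ltac:(lra) : -1 <= 1 <= 1)).
have e0 : - `|Phi 0%N| <= Phi 0%N <= `|Phi 0%N| by rewrite -ler_norml.
rewrite ler_norml; move: e0 e1 e2 e3 e4 e5 e6 e7; rewrite !mulr1.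
have -> : yp n / 2 = 1 / 2 * yp n by rewrite mulrC mul1r.
move=> /andP[? ?] /andP[? ?] /andP[? ?] /andP[? ?] /andP[? ?] /andP[? ?] /andP[? ?] /andP[? ?].
apply/andP; split; lra.
Qed.
Lemma sq_le_abs (x K : R) : `|x| <= K -> x ^+ 2 <= K ^+ 2.
Proof.
move=> h; have h0 := normr_ge0 x.
rewrite -[x ^+ 2]real_normK ?num_real //; nra.
Qed.

End Alg.

Section Main.
Variables (R : realType) (e : 'cV[R]_3) (Rc r g m f : R)
  (a u : nat -> 'cV[R]_3) (U : nat -> 'M[R]_3) (T : nat -> R).
Hypotheses (He : dot e e = 1) (Hr : 0 < r) (HrR : r < Rc) (Hg : 0 < g) (Hm : 0 < m)
  (HU0 : (U 0%N)^T = - U 0%N)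
  (Htr : noslip_trajectory e Rc r g m (f *: e) a u U T)
  (Hroll : transversal_rolling e r (a 0%N) (u 0%N) (U 0%N)).

Local Notation rho := (Rc - r).
Local Notation P n := (perp e (a n)).
Local Notation nn n := (nu e (a n)).
Local Notation tt n := (tau e (a n)).
Local Notation v n := ((collision e g r (a n) (u n) (U n)).1).
Local Notation W n := ((collision e g r (a n) (u n) (U n)).2).

Lemma rho_gt0 : 0 < rho. Proof. by rewrite subr_gt0. Qed.
Lemma rho_neq0 : rho != 0. Proof. by rewrite gt_eqF // rho_gt0. Qed.
Lemma r_neq0 : r != 0. Proof. by rewrite gt_eqF. Qed.
Lemma g_neq0 : g != 0. Proof. by rewrite gt_eqF. Qed.
Lemma m_neq0 : m != 0. Proof. by rewrite gt_eqF. Qed.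
Lemma g2_neq0 : 1 + g ^+ 2 != 0. Proof. by rewrite gt_eqF // ltr_wpDr ?sqr_ge0. Qed.

Lemma trn n : vnorm (P n) = rho /\ 0 < T n /\
    (forall t, 0 < t < T n -> in_interior e Rc r (flight m (f *: e) (a n) (v n) t)) /\
    a n.+1 = flight m (f *: e) (a n) (v n) (T n) /\
    u n.+1 = v n + (T n / m) *: (f *: e) /\ U n.+1 = W n.
Proof. by have := Htr n; rewrite /noslip_trajectory. Qed.

Ltac nz := rewrite ?g_neq0 ?g2_neq0 ?r_neq0 ?rho_neq0 ?m_neq0 //.

Lemma bnd n : vnorm (P n) = rho.
Proof. by case: (trn n). Qed.
Lemma Tpos n : 0 < T n.
Proof. by case: (trn n) => _ []. Qed.
Lemma interior n t : 0 < t < T n ->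
  in_interior e Rc r (flight m (f *: e) (a n) (v n) t).
Proof. by case: (trn n) => _ [_ [h _]]; exact: h. Qed.
Lemma a_next n : a n.+1 = flight m (f *: e) (a n) (v n) (T n).
Proof. by case: (trn n) => _ [_ [_ [h _]]]. Qed.
Lemma u_next n : u n.+1 = v n + (T n / m) *: (f *: e).
Proof. by case: (trn n) => _ [_ [_ [_ [h _]]]]. Qed.
Lemma U_next n : U n.+1 = W n.
Proof. by case: (trn n) => _ [_ [_ [_ [_ h]]]]. Qed.

Lemma dotPP n : dot (P n) (P n) = rho ^+ 2.
Proof. by rewrite -(bnd n) /vnorm sqr_sqrtr // g_dot_ge0. Qed.

Lemma nnE n : nn n = - (rho^-1 *: P n).
Proof. by rewrite /nu bnd. Qed.

Lemma PE n : P n = - rho *: nn n.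
Proof. by rewrite nnE -g_PE // rho_neq0. Qed.

Lemma Pe n : dot (P n) e = 0.
Proof. by rewrite g_perp_e He subrr mulr0. Qed.

Lemma nne n : dot (nn n) e = 0.
Proof. by rewrite nnE g_dotNZ Pe mulr0 oppr0. Qed.
Lemma en n : dot e (nn n) = 0.
Proof. by rewrite g_dotC nne. Qed.

Lemma nnn n : dot (nn n) (nn n) = 1.
Proof. rewrite nnE g_dotNZ2 dotPP; field; exact: rho_neq0. Qed.

Lemma tte n : dot (tt n) e = 0.
Proof. exact: g_cre. Qed.
Lemma ett n : dot e (tt n) = 0.
Proof. by rewrite g_dotC tte. Qed.
Lemma ttn n : dot (tt n) (nn n) = 0.
Proof. exact: g_crn. Qed.
Lemma nnt n : dot (nn n) (tt n) = 0.
Proof. by rewrite g_dotC ttn. Qed.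
Lemma ttt n : dot (tt n) (tt n) = 1.
Proof. by rewrite /tau g_lagr nnn He nne expr0n /= subr0 mulr1. Qed.

Lemma compl n x : x = dot x (nn n) *: nn n + dot x (tt n) *: tt n + dot x e *: e.
Proof. exact: g_compl' (nnn n) He (nne n). Qed.

Lemma perpv n x : perp e x = dot x (nn n) *: nn n + dot x (tt n) *: tt n.
Proof. by rewrite /perp {1}(compl n x) addrK. Qed.

Lemma P1 n (Hs : (U n)^T = - U n)
  (Hro : dot (u n) (tt n) = r * dot (tt n) (U n *m nn n)) : dot (v n) (nn n) = - dot (u n) (nn n).
Proof.
rewrite g_coll1 nnn (g_skew0 _ _ _ Hs) /cgam /sgam; field.
nz.
Qed.

Lemma P2 n (Hs : (U n)^T = - U n)
  (Hro : dot (u n) (tt n) = r * dot (tt n) (U n *m nn n)) : dot (v n) (tt n) = dot (u n) (tt n).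
Proof.
rewrite g_coll1 nnt mulr0 subr0.
have -> : dot (tt n) (U n *m nn n) = dot (u n) (tt n) / r.
  by rewrite Hro; field; exact: r_neq0.
rewrite /cgam /sgam; field.
nz.
Qed.

Lemma P3 n (Hs : (U n)^T = - U n)
  (Hro : dot (u n) (tt n) = r * dot (tt n) (U n *m nn n)) : dot (v n) e = cgam g * dot (u n) e + sgam g * (r * g * dot e (U n *m nn n)).
Proof. rewrite g_coll1 nne mulr0 subr0; ring. Qed.

Lemma P4 n (Hs : (U n)^T = - U n)
  (Hro : dot (u n) (tt n) = r * dot (tt n) (U n *m nn n)) : (W n)^T = - W n.
Proof. by apply: g_coll2_skew. Qed.

Lemma P5 n (Hs : (U n)^T = - U n)
  (Hro : dot (u n) (tt n) = r * dot (tt n) (U n *m nn n)) : r * dot (tt n) (W n *m nn n) = dot (u n) (tt n).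
Proof.
rewrite g_coll2 nnn nnt !mulr0 !subr0 !mul1r.
have -> : dot (tt n) (U n *m nn n) = dot (u n) (tt n) / r.
  by rewrite Hro; field; exact: r_neq0.
field; nz.
Qed.

Lemma P6 n (Hs : (U n)^T = - U n)
  (Hro : dot (u n) (tt n) = r * dot (tt n) (U n *m nn n)) : r * g * dot e (W n *m nn n) =
  sgam g * dot (u n) e - cgam g * (r * g * dot e (U n *m nn n)).
Proof.
rewrite g_coll2 nnn nne !mulr0 !subr0 !mul1r /cgam /sgam.
field; nz.
Qed.

Lemma P7 n (Hs : (U n)^T = - U n)
  (Hro : dot (u n) (tt n) = r * dot (tt n) (U n *m nn n)) : dot e (W n *m tt n) = dot e (U n *m tt n).
Proof.
rewrite g_coll2 nnt nne; ring.
Qed.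


Definition A0 := dot (v 0%N) (nn 0%N).
Definition L0 := dot (v 0%N) (tt 0%N).
Local Notation N0 := (A0 ^+ 2 + L0 ^+ 2).
Local Notation Tc := (2 * rho * A0 / N0).
Local Notation C := (1 - Tc * A0 / rho).
Local Notation S := (- (Tc * L0 / rho)).

Definition Inv n := (U n)^T = - U n /\ dot (u n) (nn n) = - A0 /\
  dot (u n) (tt n) = L0 /\ r * dot (tt n) (U n *m nn n) = L0.

Lemma roll0 : dot (u 0%N) (tt 0%N) = r * dot (tt 0%N) (U 0%N *m nn 0%N).
Proof.
move: Hroll; rewrite /transversal_rolling g_dot_subZ (g_dotC _ (U 0%N *m _)) => h; lra.
Qed.

Lemma Inv0 : Inv 0%N.
Proof.
have h1 := P1 _ HU0 roll0; have h2 := P2 _ HU0 roll0.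
rewrite -/A0 in h1; rewrite -/L0 in h2.
split; first exact: HU0.
split; first lra.
split; first lra.
by rewrite -roll0 h2.
Qed.

Lemma N0pos : 0 < N0.
Proof.
have h0 : 0 <= N0 by rewrite addr_ge0 // sqr_ge0.
rewrite lt_neqAle h0 andbT; apply/eqP => hN.
have hA2 : A0 ^+ 2 = 0 by have := sqr_ge0 A0; have := sqr_ge0 L0; lra.
have hL2 : L0 ^+ 2 = 0 by have := sqr_ge0 A0; have := sqr_ge0 L0; lra.
have hA : A0 = 0 by move/eqP: hA2; rewrite sqrf_eq0 => /eqP.
have hL : L0 = 0 by move/eqP: hL2; rewrite sqrf_eq0 => /eqP.
have hT := Tpos 0%N.
have := interior 0%N (T 0%N / 2) (ltac:(apply/andP; split; lra)).
rewrite /in_interior g_perp_flight He subrr mulr0 scale0r addr0.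
rewrite (perpv 0%N (v 0%N)) -/A0 -/L0 hA hL !scale0r addr0 scaler0 addr0 bnd ltxx.
done.
Qed.

Section Step.
Variable n : nat.
Hypothesis HI : Inv n.
Hypothesis HN : 0 < N0.

Lemma N0_neq0 : N0 != 0. Proof. by rewrite gt_eqF. Qed.
Lemma Hs : (U n)^T = - U n. Proof. by case: HI. Qed.
Lemma Hro : dot (u n) (tt n) = r * dot (tt n) (U n *m nn n).
Proof. by case: HI => _ [_ [-> ->]]. Qed.
Lemma hA : dot (v n) (nn n) = A0.
Proof. by rewrite (P1 _ Hs Hro); case: HI => _ [-> _]; rewrite opprK. Qed.
Lemma hL : dot (v n) (tt n) = L0.
Proof. by rewrite (P2 _ Hs Hro); case: HI => _ [_ [-> _]]. Qed.

Lemma Pnext t : perp e (flight m (f *: e) (a n) (v n) t) =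
  (t * A0 - rho) *: nn n + (t * L0) *: tt n.
Proof.
rewrite g_perp_flight He subrr mulr0 scale0r addr0 (PE n) (perpv n (v n)) hA hL.
by rewrite g_comb2.
Qed.

Lemma Tn : T n = Tc.
Proof.
have h := dotPP n.+1; rewrite a_next Pnext g_dot_comb nnn ttt nnt in h.
have h2 : T n * (T n * N0 - 2 * rho * A0) = 0 by lra.
move/eqP: h2; rewrite mulf_eq0 => /orP [/eqP T0|/eqP h3].
  by have := Tpos n; rewrite T0 ltxx.
move/eqP: h3; rewrite subr_eq0 => /eqP h3.
have -> : T n = (T n * N0) / N0 by field; rewrite N0_neq0.
by rewrite h3.
Qed.

Lemma nnnext : nn n.+1 = C *: nn n + S *: tt n.
Proof. by rewrite (nnE n.+1) a_next Pnext Tn g_nu_lin2 // rho_neq0. Qed.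

Lemma ttnext : tt n.+1 = C *: tt n + (- S) *: nn n.
Proof.
rewrite [tau e (a n.+1)]/tau nnnext [tau e (a n)]/tau g_cross_lin nne He.
by apply: colP3; rewrite !mxE; ring.
Qed.

Lemma Inv_next : Inv n.+1.
Proof.
have HW : (U n.+1)^T = - U n.+1 by rewrite U_next; exact: (P4 _ Hs Hro).
split; first exact: HW.
split.
  rewrite u_next nnnext g_dot_addZZ !g_dot_linr hA hL en ett.
  field; rewrite N0_neq0 ?rho_neq0 ?m_neq0 //.
split.
  rewrite u_next ttnext g_dot_addZZ !g_dot_linr hA hL en ett.
  field; rewrite N0_neq0 ?rho_neq0 ?m_neq0 //.
have HW' : (W n)^T = - W n by exact: (P4 _ Hs Hro).
rewrite U_next ttnext nnnext g_bil (g_skew0 _ (nn n) _ HW') (g_skew0 _ (tt n) _ HW').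
rewrite (g_skew1 _ (nn n) (tt n) _ HW').
have hX : dot (tt n) (W n *m nn n) = L0 / r.
  have h5 := P5 n Hs Hro; case: HI => _ [_ [hu _]]; rewrite hu in h5.
  by rewrite -h5; field; rewrite r_neq0.
rewrite hX; field; rewrite N0_neq0 ?rho_neq0 ?r_neq0 //.
Qed.

Lemma R1 : dot (u n.+1) e = cgam g * dot (u n) e
   + sgam g * (r * g * dot e (U n *m nn n)) + Tc * f / m.
Proof. rewrite u_next g_dot_addZZ He (P3 _ Hs Hro) Tn; field; rewrite ?m_neq0 ?N0_neq0 ?rho_neq0 //. Qed.

Lemma R2 : r * g * dot e (U n.+1 *m nn n.+1) =
  C * (sgam g * dot (u n) e - cgam g * (r * g * dot e (U n *m nn n)))
  + S * (r * g * dot e (U n *m tt n)).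
Proof.
rewrite U_next nnnext g_dotM_lin -(P6 _ Hs Hro) (P7 _ Hs Hro); ring.
Qed.

Lemma R3 : r * g * dot e (U n.+1 *m tt n.+1) =
  C * (r * g * dot e (U n *m tt n))
  - S * (sgam g * dot (u n) e - cgam g * (r * g * dot e (U n *m nn n))).
Proof.
rewrite U_next ttnext g_dotM_lin -(P6 _ Hs Hro) (P7 _ Hs Hro); ring.
Qed.

Lemma R4 : dot (a n.+1) e = dot (a n) e
   + Tc * (cgam g * dot (u n) e + sgam g * (r * g * dot e (U n *m nn n)))
   + Tc ^+ 2 / (2 * m) * f.
Proof. rewrite a_next g_flight_e He (P3 _ Hs Hro) Tn; ring. Qed.

Lemma Bd t : 0 <= t <= T n ->
  dot (flight m (f *: e) (a n) (v n) t) (flight m (f *: e) (a n) (v n) t) <=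
  rho ^+ 2 + (dot (a n) e + t * (cgam g * dot (u n) e
      + sgam g * (r * g * dot e (U n *m nn n))) + t ^+ 2 / (2 * m) * f) ^+ 2.
Proof.
move=> /andP [ht0 ht1].
rewrite (g_dotXX _ e) He Pnext g_dot_comb nnn ttt nnt g_flight_e He (P3 _ Hs Hro).
have hTc : T n * N0 = 2 * rho * A0 by rewrite Tn; field; rewrite N0_neq0.
have h3 : 0 <= t * N0 * (T n - t).
  by apply: mulr_ge0; [apply: mulr_ge0 => //; exact: ltW | rewrite subr_ge0].
have h4 : t * (T n * N0) = t * (2 * rho * A0) by rewrite hTc.
have key : (t * A0 - rho) ^+ 2 + (t * L0) ^+ 2 <= rho ^+ 2 by lra.
lra.
Qed.

End Step.

Lemma main_bound : exists M, forall n t, 0 <= t <= T n ->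
  vnorm (flight m (f *: e) (a n) (v n) t) <= M.
Proof.
have HN := N0pos.
have HI : forall n, Inv n.
  by elim => [|n IH]; [exact: Inv0 | exact: Inv_next].
have hT0 := Tn _ (HI 0%N) HN.
have hA0 : 0 < A0.
  have e1 : A0 = T 0%N * N0 / (2 * rho) by rewrite hT0; field; rewrite N0_neq0 ?rho_neq0.
  rewrite e1; apply: divr_gt0; last by apply: mulr_gt0 => //; exact: rho_gt0.
  by apply: mulr_gt0 => //; exact: Tpos.
have hTc : 0 <= Tc by rewrite -hT0; apply: ltW; exact: Tpos.
have HC : C = 1 - 2 * A0 ^+ 2 / (A0 ^+ 2 + L0 ^+ 2).
  by field; rewrite N0_neq0 ?rho_neq0.
have HS : S = - (2 * A0 * L0 / (A0 ^+ 2 + L0 ^+ 2)).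
  by field; rewrite N0_neq0 ?rho_neq0.
have [K HK] := @alg_bound R g A0 L0 Tc f m C S (fun n => dot (u n) e)
  (fun n => r * g * dot e (U n *m nn n))
  (fun n => r * g * dot e (U n *m tt n)) (fun n => dot (a n) e)
  Hg hA0 Hm hTc HC HS (fun n => R1 _ (HI n) HN) (fun n => R2 _ (HI n) HN)
  (fun n => R3 _ (HI n) HN) (fun n => R4 _ (HI n) HN).
exists (Num.sqrt (rho ^+ 2 + K ^+ 2)).
move=> n t ht; rewrite /vnorm; apply: ler_wsqrtr.
apply: le_trans (Bd _ (HI n) HN _ ht) _.
rewrite lerD2l; apply: sq_le_abs; apply: HK.
by rewrite -(Tn _ (HI n) HN).
Qed.

End Main.

Theorem theorem2p12 (R : realType) (e : 'cV[R]_3) (Rc r g m f : R)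
    (a u : nat -> 'cV[R]_3) (U : nat -> 'M[R]_3) (T : nat -> R) :
  dot e e = 1 -> 0 < r -> r < Rc -> 0 < g -> 0 < m ->
  (U 0%N)^T = - U 0%N ->
  noslip_trajectory e Rc r g m (f *: e) a u U T ->
  transversal_rolling e r (a 0%N) (u 0%N) (U 0%N) ->
  ~ (exists t, 0 <= t <= T 0%N /\
       perp e (flight m (f *: e) (a 0%N)
                 (collision e g r (a 0%N) (u 0%N) (U 0%N)).1 t) = 0) ->
  exists M : R, forall (n : nat) (t : R), 0 <= t <= T n ->
    vnorm (flight m (f *: e) (a n)
             (collision e g r (a n) (u n) (U n)).1 t) <= M.
Proof.
move=> He Hr HrR Hg Hm HU0 Htr Hroll _.
by eapply main_bound; eassumption.
Qed.
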